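(* There exists an operator $T\in B(\ell^2)$ which is similar to a contraction but whose mean transform $M(T)$ is not power bounded, i.e. $\sup_{n\ge1}\|M(T)^n\|=\infty$.
   Context: For $T\in B(H)$ with polar decomposition $T=V|T|$ ($|T|=(T^*T)^{1/2}$, $V$ the partial isometry with $\ker V=\ker T$), the mean transform is $M(T)=\frac12(|T|V+V|T|)$. $T$ is similar to a contraction if there is an invertible $L\in B(H)$ with $\|L^{-1}TL\|\le1$. *)

(* Defs.v *)
(* Operators are functions on
   sequences; only their behaviour on l^2 matters. *)
From Stdlib Require Import Reals.
From Coquelicot Require Import Coquelicot.
Open Scope R_scope.

Definition vec := nat -> C.

Definition in_l2 (x : vec) : Prop := ex_series (fun n => (Cmod (x n)) ^ 2).

Definition l2norm (x : vec) : R := sqrt (Series (fun n => (Cmod (x n)) ^ 2)).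

Definition inner (x y : vec) : C :=
  (Series (fun n => Re (Cmult (x n) (Cconj (y n)))),
   Series (fun n => Im (Cmult (x n) (Cconj (y n))))).

Definition zero_vec : vec := fun _ => 0%C.

Definition bounded_op (A : vec -> vec) : Prop :=
  (forall x, in_l2 x -> in_l2 (A x)) /\
  (forall (x y : vec) (a : C), in_l2 x -> in_l2 y ->
     A (fun n => Cplus (x n) (Cmult a (y n))) =
     (fun n => Cplus (A x n) (Cmult a (A y n)))) /\
  (exists c : R, forall x, in_l2 x -> l2norm (A x) <= c * l2norm x).

Definition similar_to_contraction (T : vec -> vec) : Prop :=
  exists L Linv : vec -> vec,
    bounded_op L /\ bounded_op Linv /\
    (forall x, in_l2 x -> Linv (L x) = x) /\
    (forall x, in_l2 x -> L (Linv x) = x) /\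
    (forall x, in_l2 x -> l2norm (Linv (T (L x))) <= l2norm x).

Definition positive_op (P : vec -> vec) : Prop :=
  forall x, in_l2 x -> Im (inner (P x) x) = 0 /\ 0 <= Re (inner (P x) x).

(* P^2 = T^* T, i.e. <P P x, y> = <T x, T y> for all x y in l^2 *)
Definition sq_eq_TstarT (P T : vec -> vec) : Prop :=
  forall x y, in_l2 x -> in_l2 y -> inner (P (P x)) y = inner (T x) (T y).

(* V is a partial isometry: isometric on (ker V)^perp *)
Definition partial_isometry (V : vec -> vec) : Prop :=
  forall x, in_l2 x ->
    (forall z, in_l2 z -> V z = zero_vec -> inner x z = 0%C) ->
    l2norm (V x) = l2norm x.

Definition polar_decomposition (T P V : vec -> vec) : Prop :=
  bounded_op P /\ bounded_op V /\
  positive_op P /\ sq_eq_TstarT P T /\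
  partial_isometry V /\
  (forall x, in_l2 x -> (V x = zero_vec <-> T x = zero_vec)) /\
  (forall x, in_l2 x -> T x = V (P x)).

Definition mean_transform (P V : vec -> vec) : vec -> vec :=
  fun x n => Cmult (/ 2)%C (Cplus (P (V x) n) (V (P x) n)).

Definition power_bounded (A : vec -> vec) : Prop :=
  exists C0 : R, forall (n : nat) x, (1 <= n)%nat -> in_l2 x ->
    l2norm (Nat.iter n A x) <= C0 * l2norm x.

(* Main.v *)
Require Import Defs.
From Stdlib Require Import Reals Lra Lia FunctionalExtensionality.
From Coquelicot Require Import Coquelicot.
Open Scope R_scope.

Lemma is_series_zero (a : nat -> R) : (forall n, a n = 0) -> is_series a 0.
Proof.
  intros H. unfold is_series.
  apply (filterlim_ext (fun _ => 0)).
  - intros n. induction n.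
    + rewrite sum_O. now rewrite H.
    + rewrite sum_Sn, <- IHn, H. simpl. unfold plus; simpl. ring.
  - apply filterlim_const.
Qed.

Lemma is_series_single (a : nat -> R) (i : nat) :
  (forall n, n <> i -> a n = 0) -> is_series a (a i).
Proof.
  revert a. induction i; intros a H.
  - apply is_series_decr_1.
    match goal with |- is_series _ ?l => replace l with 0 end.
    + apply is_series_zero. intros n. apply H. lia.
    + unfold plus, opp; simpl. ring.
  - apply is_series_decr_1.
    rewrite (H 0%nat) by lia.
    match goal with |- is_series _ ?l => replace l with (a (S i)) end.
    + apply (IHi (fun k => a (S k))). intros n Hn. apply H. lia.
    + unfold plus, opp; simpl. ring.
Qed.

Lemma Series_single (a : nat -> R) (i : nat) :
  (forall n, n <> i -> a n = 0) -> Series a = a i.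
Proof. intros H. apply is_series_unique. now apply is_series_single. Qed.

Lemma Series_shift0 (a : nat -> R) : a 0%nat = 0 -> Series a = Series (fun k => a (S k)).
Proof.
  intros H. unfold Series. rewrite <- Lim_seq_incr_1.
  f_equal. apply Lim_seq_ext. intros n. induction n.
  - rewrite sum_Sn, !sum_O, H. unfold plus; simpl. ring.
  - rewrite sum_Sn, IHn, (sum_Sn (fun k => a (S k))). reflexivity.
Qed.

Lemma Cmod2 (z : C) : Cmod z ^ 2 = Re z ^ 2 + Im z ^ 2.
Proof.
  unfold Cmod. rewrite pow2_sqrt; [reflexivity|]. 
  apply Rplus_le_le_0_compat; apply pow2_ge_0.
Qed.

Lemma in_l2_zero : in_l2 zero_vec.
Proof.
  exists 0. apply is_series_zero. intros n. unfold zero_vec. rewrite Cmod_0. ring.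
Qed.

Lemma Series_nonneg_ex (a : nat -> R) : (forall n, 0 <= a n) -> ex_series a -> 0 <= Series a.
Proof.
  intros H E. rewrite <- (Series_single (fun _ => 0) 0) by auto.
  apply Series_le; auto. intros n; split; [lra| auto].
Qed.

Lemma in_l2_comb (x y : vec) (c : C) : in_l2 x -> in_l2 y ->
  in_l2 (fun n => (x n + c * y n)%C).
Proof.
  intros Hx Hy. unfold in_l2.
  apply (@ex_series_le R_AbsRing R_CompleteNormedModule _ (fun n => 2 * Cmod (x n) ^ 2 + (2 * Cmod c ^ 2) * Cmod (y n) ^ 2)).
  - intros n. unfold norm; simpl. unfold abs; simpl.
    rewrite Rabs_pos_eq by (apply pow2_ge_0).
    pose proof (Cmod_triangle (x n) (c * y n)) as T. rewrite Cmod_mult in T.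
    pose proof (Cmod_ge_0 (x n + c * y n)). pose proof (Cmod_ge_0 (x n)).
    pose proof (Cmod_ge_0 (y n)). pose proof (Cmod_ge_0 c).
    assert (0 <= Cmod c * Cmod (y n)) by (apply Rmult_le_pos; auto).
    set (s := Cmod (x n + c * y n)) in *. set (a := Cmod (x n)) in *.
    set (b := Cmod c * Cmod (y n)) in *.
    assert (s * s <= (a + b) * (a + b)) by (apply Rmult_le_compat; lra).
    replace (2 * (Cmod c * (Cmod c * 1)) * (Cmod (y n) * (Cmod (y n) * 1))) with (2 * (b * b)) by (unfold b; ring).
    pose proof (pow2_ge_0 (a - b)). simpl in *. nra.
  - apply (ex_series_plus (fun n => 2 * Cmod (x n) ^ 2) (fun n => (2 * Cmod c ^ 2) * Cmod (y n) ^ 2)).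
    + apply (ex_series_scal_l 2 (fun n => Cmod (x n) ^ 2)). exact Hx.
    + apply (ex_series_scal_l (2 * Cmod c ^ 2) (fun n => Cmod (y n) ^ 2)). exact Hy.
Qed.

Lemma in_l2_scal (x : vec) (c : C) : in_l2 x -> in_l2 (fun n => (c * x n)%C).
Proof.
  intros Hx. eapply ex_series_ext; [| apply (in_l2_comb zero_vec x c in_l2_zero Hx)].
  intros n. simpl. unfold zero_vec. rewrite Cplus_0_l. reflexivity.
Qed.

Definition diag (c : nat -> R) (x : vec) : vec := fun n => (RtoC (c n) * x n)%C.
Definition shift (x : vec) : vec := fun n => match n with O => 0%C | S m => x m end.

Lemma diag_l2 (c : nat -> R) (K : R) (x : vec) : (forall n, Rabs (c n) <= K) -> in_l2 x ->
  in_l2 (diag c x) /\ l2norm (diag c x) <= K * l2norm x.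
Proof.
  intros Hc Hx.
  assert (HK : 0 <= K) by (specialize (Hc 0%nat); pose proof (Rabs_pos (c 0%nat)); lra).
  assert (B : forall n, 0 <= Cmod (diag c x n) ^ 2 <= K ^ 2 * Cmod (x n) ^ 2).
  { intros n. unfold diag. rewrite Cmod_mult, Cmod_R. specialize (Hc n).
    pose proof (Rabs_pos (c n)). pose proof (Cmod_ge_0 (x n)).
    split; [apply pow2_ge_0|].
    rewrite Rpow_mult_distr. apply Rmult_le_compat_r; [apply pow2_ge_0|].
    apply pow_incr; lra. }
  assert (E : ex_series (fun n => K ^ 2 * Cmod (x n) ^ 2)).
  { apply (ex_series_scal_l (K ^ 2) (fun n => Cmod (x n) ^ 2)). exact Hx. }
  split.
  - unfold in_l2. apply (@ex_series_le R_AbsRing R_CompleteNormedModule _ _ (fun n => proj2 (B n)) ) || 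
    (apply (@ex_series_le R_AbsRing R_CompleteNormedModule _ (fun n => K ^ 2 * Cmod (x n) ^ 2)); [|exact E];
     intros n; unfold norm; simpl; unfold abs; simpl; rewrite Rabs_pos_eq; apply B).
  - unfold l2norm. 
    replace K with (sqrt (K ^ 2)) at 1 by (apply sqrt_pow2; exact HK).
    rewrite <- sqrt_mult_alt by (apply pow2_ge_0).
    apply sqrt_le_1_alt. rewrite <- Series_scal_l. apply Series_le; auto.
Qed.

Lemma shift_l2 (x : vec) : in_l2 x -> in_l2 (shift x) /\ l2norm (shift x) = l2norm x.
Proof.
  intros Hx. split.
  - unfold in_l2. apply ex_series_incr_1. exact Hx.
  - unfold l2norm. f_equal. rewrite Series_shift0; [reflexivity|].
    simpl. rewrite Cmod_0. ring.
Qed.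

Lemma diag_bounded (c : nat -> R) (K : R) : (forall n, Rabs (c n) <= K) -> bounded_op (diag c).
Proof.
  intros Hc. split; [|split].
  - intros x Hx. apply (diag_l2 c K x Hc Hx).
  - intros x y a _ _. apply functional_extensionality. intros n. unfold diag. ring.
  - exists K. intros x Hx. apply (diag_l2 c K x Hc Hx).
Qed.

Lemma shift_bounded : bounded_op shift.
Proof.
  split; [|split].
  - intros x Hx. apply (shift_l2 x Hx).
  - intros x y a _ _. apply functional_extensionality. intros [|n]; simpl; ring.
  - exists 1. intros x Hx. rewrite (proj2 (shift_l2 x Hx)). lra.
Qed.

Definition alpha (n : nat) : R := if Nat.even n then 2 else / 2.
Definition dd (n : nat) : R := if Nat.even n then 1 else 2.
Definition Tm (x : vec) : vec := shift (diag alpha x).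

Lemma alpha_bound n : Rabs (alpha n) <= 2.
Proof. unfold alpha. destruct (Nat.even n); rewrite Rabs_pos_eq; lra. Qed.

Lemma alpha_pos n : 0 < alpha n.
Proof. unfold alpha. destruct (Nat.even n); lra. Qed.

Lemma alpha_sum n : alpha n + alpha (S n) = 5 / 2.
Proof.
  unfold alpha. rewrite Nat.even_succ, <- Nat.negb_even.
  destruct (Nat.even n); simpl; lra.
Qed.

Lemma Tm_bounded : bounded_op Tm.
Proof.
  destruct (diag_bounded alpha 2 alpha_bound) as [D1 [D2 [K D3]]].
  split; [|split].
  - intros x Hx. apply shift_l2. apply D1, Hx.
  - intros x y a Hx Hy. unfold Tm. rewrite D2 by auto. apply shift_bounded; apply D1; auto.
  - exists 2. intros x Hx. unfold Tm. rewrite (proj2 (shift_l2 _ (D1 x Hx))).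
    apply (diag_l2 alpha 2 x alpha_bound Hx).
Qed.

Ltac csimp := unfold Cmult, Cplus, Cconj, Copp, Cminus, RtoC, Re, Im in *; simpl in *.

Lemma dd_pos n : 0 < dd n.
Proof. unfold dd. destruct (Nat.even n); lra. Qed.

Lemma sim_contr : similar_to_contraction Tm.
Proof.
  exists (diag dd), (diag (fun n => / dd n)).
  split; [|split; [|split; [|split]]].
  - apply (diag_bounded dd 2). intros n; unfold dd; destruct (Nat.even n); rewrite Rabs_pos_eq; lra.
  - apply (diag_bounded _ 1). intros n; unfold dd; destruct (Nat.even n); rewrite Rabs_pos_eq; lra.
  - intros x _. apply functional_extensionality. intros n. unfold diag.
    pose proof (dd_pos n). destruct (x n) as [a b]. csimp. f_equal; field; lra.
  - intros x _. apply functional_extensionality. intros n. unfold diag.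
    pose proof (dd_pos n). destruct (x n) as [a b]. csimp. f_equal; field; lra.
  - intros x Hx.
    assert (E : diag (fun n => / dd n) (Tm (diag dd x)) = shift x).
    { apply functional_extensionality. intros [|m]; unfold Tm, diag, shift; cbv beta.
      - csimp. f_equal; ring.
      - destruct (x m) as [a b]. unfold alpha, dd. rewrite Nat.even_succ, <- Nat.negb_even.
        destruct (Nat.even m); csimp; f_equal; field. }
    rewrite E, (proj2 (shift_l2 x Hx)). lra.
Qed.

Lemma Re_sq (a : R) (z : C) : Re (RtoC a * z * Cconj z) = a * Cmod z ^ 2.
Proof. rewrite Cmod2. destruct z as [u v]. csimp. ring. Qed.

Lemma polar_exists : polar_decomposition Tm (diag alpha) shift.
Proof.
  split; [apply (diag_bounded alpha 2 alpha_bound)|].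
  split; [apply shift_bounded|].
  split.
  { intros x Hx. unfold inner.
    change (Series (fun n => Im (diag alpha x n * Cconj (x n))) = 0 /\ 0 <= Series (fun n => Re (diag alpha x n * Cconj (x n)))).
    split.
    - rewrite (Series_single _ 0).
      + unfold diag. destruct (x 0%nat). csimp. ring.
      + intros n _. unfold diag. destruct (x n). csimp. ring.
    - apply Series_nonneg_ex.
      + intros n. unfold diag; cbv beta. rewrite Re_sq. apply Rmult_le_pos; [left; apply alpha_pos|apply pow2_ge_0].
      + apply (@ex_series_le R_AbsRing R_CompleteNormedModule _ (fun n => 2 * Cmod (x n) ^ 2)).
        * intros n. unfold diag; cbv beta. rewrite Re_sq. unfold norm; simpl; unfold abs; simpl.
          pose proof (alpha_bound n). pose proof (alpha_pos n). pose proof (pow2_ge_0 (Cmod (x n))).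
          rewrite Rabs_pos_eq by nra. rewrite Rabs_pos_eq in H by lra. nra.
        * apply (ex_series_scal_l 2 (fun n => Cmod (x n) ^ 2)). exact Hx. }
  split.
  { intros x y Hx Hy. unfold inner. f_equal.
    - rewrite (Series_shift0 (fun n => Re (Tm x n * Cconj (Tm y n)))).
      + apply Series_ext. intros n. unfold Tm, diag, shift; cbv beta.
        destruct (x n), (y n). csimp. ring.
      + unfold Tm, shift. csimp. ring.
    - rewrite (Series_shift0 (fun n => Im (Tm x n * Cconj (Tm y n)))).
      + apply Series_ext. intros n. unfold Tm, diag, shift; cbv beta.
        destruct (x n), (y n). csimp. ring.
      + unfold Tm, shift. csimp. ring. }
  split.
  { intros x Hx _. apply shift_l2, Hx. }
  split.
  { intros x Hx. split; intros H.
    - apply functional_extensionality. intros [|m]; [reflexivity|].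
      unfold Tm, shift, diag. pose proof (equal_f H (S m)) as Hm. simpl in Hm.
      rewrite Hm. unfold zero_vec. csimp. f_equal; ring.
    - apply functional_extensionality. intros [|m]; [reflexivity|].
      pose proof (equal_f H (S m)) as Hm. unfold Tm, shift, diag, zero_vec in Hm.
      simpl. unfold zero_vec. pose proof (alpha_pos m).
      destruct (x m) as [u v]. csimp. injection Hm as H1 H2.
      f_equal; nra. }
  intros x _. reflexivity.
Qed.

Definition e0 : vec := fun n => match n with O => 1%C | _ => 0%C end.
Definition e (j : nat) : vec := Nat.iter j shift e0.

Lemma e_spec j n : e j n = if Nat.eqb n j then 1%C else 0%C.
Proof.
  revert n. induction j; intros n.
  - destruct n; reflexivity.
  - simpl. destruct n; [reflexivity|]. simpl. apply IHj.
Qed.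

Lemma e_out j n : n <> j -> e j n = 0%C.
Proof. intros H. rewrite e_spec. destruct (Nat.eqb_spec n j); [contradiction|reflexivity]. Qed.

Lemma e_at j : e j j = 1%C.
Proof. rewrite e_spec, Nat.eqb_refl. reflexivity. Qed.

Lemma in_l2_e j : in_l2 (e j).
Proof.
  exists (Cmod (e j j) ^ 2). apply (is_series_single (fun n => Cmod (e j n) ^ 2) j).
  intros n H. rewrite e_out by auto. rewrite Cmod_0. ring.
Qed.

Lemma l2norm_se (r : R) j : 0 <= r -> l2norm (fun n => (RtoC r * e j n)%C) = r.
Proof.
  intros Hr. unfold l2norm. rewrite (Series_single _ j).
  - rewrite e_at, Cmult_1_r, Cmod_R, Rabs_pos_eq by exact Hr. apply sqrt_pow2, Hr.
  - intros n H. rewrite e_out by auto. rewrite Cmult_0_r, Cmod_0. ring.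
Qed.

Lemma inner_single (z w : vec) k : (forall n, n <> k -> w n = 0%C) ->
  inner z w = (z k * Cconj (w k))%C.
Proof.
  intros H. unfold inner. rewrite (Series_single _ k), (Series_single (fun n => Im _) k).
  - destruct (z k * Cconj (w k))%C; reflexivity.
  - intros n Hn. rewrite H by auto. destruct (z n). csimp. ring.
  - intros n Hn. rewrite H by auto. destruct (z n). csimp. ring.
Qed.

Lemma coord (z : vec) i : inner z (e i) = z i.
Proof.
  rewrite (inner_single z (e i) i) by (apply e_out). rewrite e_at.
  destruct (z i). csimp. f_equal; ring.
Qed.

Lemma lin_zero (A : vec -> vec) : bounded_op A -> A zero_vec = zero_vec.
Proof.
  intros [_ [HL _]].
  pose proof (HL zero_vec zero_vec 1%C in_l2_zero in_l2_zero) as H.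
  assert (E : (fun n => (zero_vec n + 1 * zero_vec n)%C) = zero_vec).
  { apply functional_extensionality; intros n; unfold zero_vec. ring. }
  rewrite E in H. apply functional_extensionality. intros n.
  pose proof (equal_f H n) as Hn. simpl in Hn. change (A zero_vec n = 0%C).
  destruct (A zero_vec n) as [u v]. csimp. injection Hn as H1 H2. f_equal; lra.
Qed.

Lemma lin_scal (A : vec -> vec) (x : vec) (c : C) : bounded_op A -> in_l2 x ->
  A (fun n => (c * x n)%C) = (fun n => (c * A x n)%C).
Proof.
  intros HA Hx. pose proof (lin_zero A HA) as Z.
  destruct HA as [_ [HL _]].
  pose proof (HL zero_vec x c in_l2_zero Hx) as H.
  assert (E : (fun n => (zero_vec n + c * x n)%C) = (fun n => (c * x n)%C)).
  { apply functional_extensionality; intros n; unfold zero_vec. ring. }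
  rewrite E, Z in H. rewrite H. apply functional_extensionality; intros n; unfold zero_vec. ring.
Qed.

Lemma l2_zero (u : vec) : in_l2 u -> Series (fun n => Cmod (u n) ^ 2) <= 0 -> forall k, u k = 0%C.
Proof.
  intros Hu HS k. apply Cmod_eq_0.
  assert (Cmod (u k) ^ 2 <= 0).
  { eapply Rle_trans; [|exact HS].
    assert (E : Series (fun n => if Nat.eqb n k then Cmod (u k) ^ 2 else 0) = Cmod (u k) ^ 2).
    { rewrite (Series_single _ k).
      - rewrite Nat.eqb_refl. reflexivity.
      - intros n Hn. destruct (Nat.eqb_spec n k); [contradiction|reflexivity]. }
    rewrite <- E.
    apply Series_le; [|exact Hu]. intros n. destruct (Nat.eqb_spec n k).
    + subst. split; [apply pow2_ge_0|lra].
    + split; [lra|apply pow2_ge_0]. }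
  pose proof (Cmod_ge_0 (u k)). nra.
Qed.

Lemma e_S j i : e (S j) (S i) = e j i.
Proof. reflexivity. Qed.

Lemma Tm_e j : Tm (e j) = (fun n => (RtoC (alpha j) * e (S j) n)%C).
Proof.
  apply functional_extensionality. intros [|m].
  - unfold Tm, shift. rewrite e_out by lia. ring.
  - unfold Tm, shift, diag. rewrite e_S. rewrite e_spec.
    destruct (Nat.eqb_spec m j); [subst; reflexivity|ring].
Qed.

Section Neg.
Variables P V : vec -> vec.
Hypothesis HPV : polar_decomposition Tm P V.

Lemma PP j : P (P (e j)) = (fun n => (RtoC (alpha j * alpha j) * e j n)%C).
Proof.
  destruct HPV as [BP [BV [PosP [Sq [PI [Ker TVP]]]]]].
  apply functional_extensionality. intros i.
  rewrite <- (coord (P (P (e j))) i).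
  rewrite Sq by apply in_l2_e. rewrite (Tm_e j), (Tm_e i).
  rewrite (inner_single _ _ (S i)).
  - rewrite e_S, e_at. rewrite e_spec. destruct (Nat.eqb_spec i j).
    + subst. csimp. f_equal; ring.
    + csimp. f_equal; ring.
  - intros n Hn. rewrite e_out by auto. ring.
Qed.

Lemma P_e j : P (e j) = (fun n => (RtoC (alpha j) * e j n)%C).
Proof.
  pose proof (PP j) as HPP.
  destruct HPV as [BP [BV [PosP [Sq [PI [Ker TVP]]]]]].
  set (a := alpha j). pose proof (alpha_pos j) as Ha. fold a in Ha.
  set (u := fun n => (P (e j) n + (- RtoC a) * e j n)%C).
  assert (Hu : in_l2 u) by (apply in_l2_comb; [apply BP, in_l2_e|apply in_l2_e]).
  assert (HPu : P u = (fun n => (- RtoC a * u n)%C)).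
  { destruct BP as [BPl2 [HL _]]. unfold u.
    rewrite (HL (P (e j)) (e j) (- RtoC a)%C) by (apply BPl2, in_l2_e || apply in_l2_e).
    rewrite HPP. apply functional_extensionality. intros n. rewrite RtoC_mult. unfold a. ring. }
  destruct (PosP u Hu) as [_ Hre]. rewrite HPu in Hre. unfold inner in Hre.
  change (0 <= Series (fun n => Re (- RtoC a * u n * Cconj (u n))%C)) in Hre.
  rewrite (Series_ext _ (fun n => - a * Cmod (u n) ^ 2)) in Hre.
  2:{ intros n. rewrite Cmod2. destruct (u n). csimp. ring. }
  rewrite Series_scal_l in Hre.
  assert (HS : Series (fun n => Cmod (u n) ^ 2) <= 0) by nra.
  pose proof (l2_zero u Hu HS) as Z.
  apply functional_extensionality. intros k.
  transitivity ((P (e j) k + - RtoC a * e j k) + RtoC a * e j k)%C; [ring|].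
  change (u k + RtoC a * e j k = RtoC a * e j k)%C. rewrite Z. ring.
Qed.
End Neg.

Section Neg2.
Variables P V : vec -> vec.
Hypothesis HPV : polar_decomposition Tm P V.

Lemma RtoC_alpha_nz j : RtoC (alpha j) <> 0%C.
Proof. intros H. apply (f_equal fst) in H. simpl in H. pose proof (alpha_pos j). lra. Qed.

Lemma V_e j : V (e j) = e (S j).
Proof.
  pose proof (P_e P V HPV j) as HPe.
  destruct HPV as [BP [BV [PosP [Sq [PI [Ker TVP]]]]]].
  pose proof (TVP (e j) (in_l2_e j)) as H. rewrite HPe, (lin_scal V) in H by (auto; apply in_l2_e).
  rewrite Tm_e in H. apply functional_extensionality. intros n.
  pose proof (equal_f H n) as Hn. cbv beta in Hn. pose proof (RtoC_alpha_nz j).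
  transitivity (/ RtoC (alpha j) * (RtoC (alpha j) * V (e j) n))%C; [field; auto|].
  rewrite <- Hn. field. auto.
Qed.

Lemma M_scal c j : mean_transform P V (fun n => (c * e j n)%C) =
  (fun n => (c * RtoC (5/4) * e (S j) n)%C).
Proof.
  pose proof (V_e j) as HVe. pose proof (P_e P V HPV (S j)) as HPe.
  destruct HPV as [BP [BV [PosP [Sq [PI [Ker TVP]]]]]].
  unfold mean_transform. apply functional_extensionality. intros n.
  rewrite (lin_scal V) by (auto; apply in_l2_e). rewrite HVe.
  rewrite (lin_scal P) by (auto; apply in_l2_e). rewrite HPe.
  rewrite <- TVP by (apply in_l2_scal, in_l2_e).
  rewrite (lin_scal Tm) by (apply Tm_bounded || apply in_l2_e). rewrite Tm_e.
  pose proof (alpha_sum j).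
  replace (alpha (S j)) with (5/2 - alpha j) by lra.
  destruct c as [c1 c2]. destruct (e (S j) n) as [u v].
  unfold Cinv. csimp. f_equal; field.
Qed.

Lemma iter_M n : Nat.iter n (mean_transform P V) (e 0) = (fun k => (RtoC ((5/4) ^ n) * e n k)%C).
Proof.
  induction n.
  - simpl. apply functional_extensionality. intros k. destruct (e0 k). csimp. f_equal; ring.
  - change (Nat.iter (S n) (mean_transform P V) (e 0)) with (mean_transform P V (Nat.iter n (mean_transform P V) (e 0))). rewrite IHn, M_scal. apply functional_extensionality. intros k.
    rewrite <- tech_pow_Rmult, (Rmult_comm (5/4)), RtoC_mult. reflexivity.
Qed.
End Neg2.

Lemma bern n : 1 + INR n / 4 <= (5/4) ^ n.
Proof.
  induction n.
  - simpl. lra.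
  - rewrite S_INR. simpl pow. pose proof (pos_INR n).
    assert (0 <= (5/4) ^ n) by (apply pow_le; lra). nra.
Qed.

Theorem mainTheorem11 :
  exists T : vec -> vec,
    bounded_op T /\ similar_to_contraction T /\
    (exists P V, polar_decomposition T P V) /\
    (forall P V, polar_decomposition T P V ->
       ~ power_bounded (mean_transform P V)).
Proof.
  exists Tm. split; [apply Tm_bounded|]. split; [apply sim_contr|].
  split; [exists (diag alpha), shift; apply polar_exists|].
  intros P V HPV [C0 HC].
  destruct (INR_unbounded (4 * C0)) as [n Hn].
  specialize (HC (S n) (e 0) ltac:(lia) (in_l2_e 0)).
  rewrite (iter_M P V HPV) in HC.
  rewrite l2norm_se in HC by (apply pow_le; lra).
  assert (E1 : l2norm (e 0) = 1).
  { rewrite <- (l2norm_se 1 0) by lra. f_equal. apply functional_extensionality.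
    intros k. destruct (e 0 k). csimp. f_equal; ring. }
  rewrite E1 in HC. pose proof (bern (S n)). rewrite S_INR in H. lra.
Qed.
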